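(* Let $S$ be a finite set with $n\ge1$ elements and $p:2^{S}\to\mathbb{Z}\cup\{-\infty\}$ a set-function with $p(\emptyset)=0$ and $p(S)$ finite. Call an integer $\mu$ good if $\mu|X|\ge p(X)$ for every $X\subseteq S$, and bad otherwise; let $\mu_{\min}$ be the smallest good integer (equivalently, $\max\{\lceil p(X)/|X|\rceil:\emptyset\ne X\subseteq S\}$). Consider the following procedure. Let $\mu_0=\lceil p(S)/|S|\rceil-1$ (which is bad) and let $X_0$ be any set maximizing $p(X)-\mu_0|X|$ over $X\subseteq S$. For $j=1,2,\dots$, given $X_{j-1}$, let $\mu_j=\lceil p(X_{j-1})/|X_{j-1}|\rceil$; if $\mu_j$ is good, stop and output $\mu_j$; otherwise let $X_j$ be any set maximizing $p(X)-\mu_j|X|$ over $X\subseteq S$ (so $X_j\neq\emptyset$) and continue. Then the procedure stops, and if $h$ is the first index for which $\mu_h$ is good, then $\mu_h=\mu_{\min}$ and $h\le n$. *)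

(* Defs.v *)
From HB Require Import structures.
From mathcomp Require Import all_boot all_order all_algebra.
Set Implicit Arguments. Unset Strict Implicit. Unset Printing Implicit Defensive.
Import Order.TTheory GRing.Theory Num.Theory.
Local Open Scope ring_scope.

(* Values in Z ∪ {-oo}: [None] stands for -oo, [Some a] for the integer a. *)
Definition zinf := option int.

Definition zinf_le (u v : zinf) : bool :=
  match u, v with
  | None, _ => true
  | Some _, None => false
  | Some a, Some b => a <= b
  end.

Definition ceil_div (a : int) (b : nat) : int :=
  Num.ceil ((a%:~R : rat) / (b%:R : rat)).

Definition good (T : finType) (p : {set T} -> zinf) (mu : int) : Prop :=
  forall X : {set T}, zinf_le (p X) (Some (mu * (#|X|%:Z))).

Definition objective (T : finType) (p : {set T} -> zinf) (mu : int) (X : {set T}) : zinf :=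
  omap (fun a => a - mu * (#|X|%:Z)) (p X).

Definition is_maximizer (T : finType) (p : {set T} -> zinf) (mu : int) (X : {set T}) : Prop :=
  forall Y : {set T}, zinf_le (objective p mu Y) (objective p mu X).

(* Main.v *)
Require Import Defs.
From HB Require Import structures.
From mathcomp Require Import all_boot all_order all_algebra.
From mathcomp Require Import zify.
Import Order.TTheory GRing.Theory Num.Theory.
Local Open Scope ring_scope.

Lemma ceil_div_le (a m : int) (k : nat) : (0 < k)%N ->
  (ceil_div a k <= m) = (a <= m * k%:Z).
Proof.
move=> k0; rewrite /ceil_div Num.Theory.ceil_le_int ler_pdivrMr ?ltr0n //.
by rewrite -[k%:R]/((k%:Z)%:~R) -intrM ler_int.
Qed.

Lemma step_ineq (k k' a a' mu mu' : int) : 0 < mu' - mu ->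
  a' - mu * k' <= a - mu * k -> 0 < a' - mu' * k' -> a - mu' * k <= 0 -> k' < k.
Proof. move=> *; nia. Qed.


Definition goodb {T : finType} (p : {set T} -> zinf) (mu : int) := [forall Y : {set T}, zinf_le (p Y) (Some (mu * #|Y|%:Z))].

Lemma goodP {T : finType} {p : {set T} -> zinf} {mu} : reflect (good p mu) (goodb p mu).
Proof. exact: forallP. Qed.

Lemma bad_max {T : finType} {p : {set T} -> zinf} {mu Xm} : p set0 = Some 0 -> ~ good p mu -> is_maximizer p mu Xm ->
  exists a, [/\ p Xm = Some a, mu * #|Xm|%:Z < a & (0 < #|Xm|)%N].
Proof.
move=> hp0 /goodP; rewrite negb_forall => /existsP [Y hY] /(_ Y).
rewrite /objective; case: (p Y) hY => [b|] //= hb.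
case E: (p Xm) => [a|] //= hle.
have ha : mu * #|Xm|%:Z < a.
  rewrite -subr_gt0; apply: (lt_le_trans _ hle); rewrite subr_gt0; by rewrite ltNge.
exists a; split => //; rewrite card_gt0; apply/negP => /eqP e.
by move: E ha; rewrite e hp0 => -[<-]; rewrite cards0 mulr0 ltxx.
Qed.
Arguments step_ineq {k k' a a' mu mu'}.

Theorem theorem2p11 (T : finType) (p : {set T} -> zinf) (pS : int)
  (mu : nat -> int) (X : nat -> {set T})
  (hn : (0 < #|T|)%N)
  (hp0 : p set0 = Some 0)
  (hpS : p [set: T] = Some pS)
  (hmu0 : mu 0%N = ceil_div pS #|T| - 1)
  (hX0 : is_maximizer p (mu 0%N) (X 0%N))
  (hmuS : forall j : nat, (forall i : nat, (i <= j)%N -> ~ good p (mu i)) ->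
            mu j.+1 = ceil_div (odflt 0 (p (X j))) #|X j|)
  (hXS : forall j : nat, (forall i : nat, (i <= j.+1)%N -> ~ good p (mu i)) ->
            is_maximizer p (mu j.+1) (X j.+1)) :
  exists h : nat,
    [/\ good p (mu h),
        forall j : nat, (j < h)%N -> ~ good p (mu j),
        (h <= #|T|)%N
      & forall m : int, good p m -> mu h <= m].
Proof.
have bad0 : ~ good p (mu 0%N).
  move=> /(_ setT); rewrite hpS /= cardsT hmu0 => hle.
  have : ceil_div pS #|T| <= ceil_div pS #|T| - 1 by rewrite ceil_div_le.
  lia.
have maxj : forall j, (forall i, (i <= j)%N -> ~ good p (mu i)) -> is_maximizer p (mu j) (X j).
  by case=> [|j] H; [exact: hX0 | exact: hXS].
have stepj : forall j, (forall i, (i <= j.+1)%N -> ~ good p (mu i)) -> (#|X j.+1| < #|X j|)%N.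
  move=> j H.
  have Hj : forall i, (i <= j)%N -> ~ good p (mu i) by move=> i hi; apply: H; exact: leqW.
  have [a [Ea ha k0]] := bad_max hp0 (Hj j (leqnn j)) (maxj j Hj).
  have [a' [Ea' ha' k0']] := bad_max hp0 (H j.+1 (leqnn _)) (maxj _ H).
  have emu := hmuS j Hj; rewrite Ea /= in emu.
  have h1 : a' - mu j * #|X j.+1|%:Z <= a - mu j * #|X j|%:Z.
    by have := maxj j Hj (X j.+1); rewrite /objective Ea Ea'.
  have h3 : a - mu j.+1 * #|X j|%:Z <= 0.
    by rewrite subr_le0 -ceil_div_le // emu.
  have h2 : 0 < mu j.+1 - mu j.
    rewrite subr_gt0 ltNge emu ceil_div_le //; by rewrite -ltNge.
  have := step_ineq h2 h1 _ h3; rewrite subr_gt0 => /(_ ha'); by rewrite ltz_nat.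
have sizej : forall j, (forall i, (i <= j)%N -> ~ good p (mu i)) -> (j + #|X j| <= #|X 0%N|)%N.
  elim=> [|j IH] H; first by [].
  have := stepj j H.
  have := IH (fun i hi => H i (leqW hi)); lia.
have exg : exists i, (i <= #|T|)%N /\ good p (mu i).
  case: (boolP [exists i : 'I_#|T|.+1, goodb p (mu i)]).
    by case/existsP=> i /goodP hi; exists i; split => //; rewrite -ltnS.
  rewrite negb_exists => /forallP Hall.
  have Hb : forall i, (i <= #|T|)%N -> ~ good p (mu i).
    by move=> i hi /goodP; have := Hall (Ordinal (hi : (i < #|T|.+1)%N)) => /negP.
  have := sizej _ Hb; have := max_card (X 0%N).
  have [a [_ _ k0]] := bad_max hp0 (Hb _ (leqnn _)) (maxj _ Hb).
  move: k0; lia.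
have exg' : exists i, goodb p (mu i) by case: exg => i [_ /goodP]; exists i.
case: (ex_minnP exg') => h /goodP hg hmin.
have hlt : forall j, (j < h)%N -> ~ good p (mu j).
  by move=> j hj /goodP /hmin; rewrite leqNgt hj.
exists h; split => //.
  by case: exg => i [hi /goodP /hmin]; move=> hh; exact: leq_trans hh hi.
case: h hg hmin hlt => [|h] hg _ hlt; first by [].
have Hb : forall i, (i <= h)%N -> ~ good p (mu i) by move=> i hi; apply: hlt.
have [a [Ea ha k0]] := bad_max hp0 (Hb _ (leqnn _)) (maxj _ Hb).
move=> m /(_ (X h)); rewrite (hmuS h Hb) Ea /= => hm.
by rewrite ceil_div_le.
Qed.
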